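(* Let $A$ and $B$ be convex subsets of $\mathbb R^2$ and let $k\ge 0$ be an integer. Assume $A$ contains a circle of radius $r$ and $B$ contains a circle of radius $R$, such that $rR\ge\frac{1}{2^k}(1+\sqrt2)^2$. Then the scaled grid problem over $\mathbb Z[\omega]$ for $A$, $B$ and $k$ has at least $2$ solutions.
   Context: Let $\omega=e^{i\pi/4}$ and $\mathbb Z[\omega]=\{a_0+a_1\omega+a_2\omega^2+a_3\omega^3: a_j\in\mathbb Z\}\subseteq\mathbb C\cong\mathbb R^2$, with automorphism $(a_0+a_1\omega+a_2\omega^2+a_3\omega^3)^\bullet=a_0-a_1\omega+a_2\omega^2-a_3\omega^3$. A solution of the scaled grid problem over $\mathbb Z[\omega]$ for $A$, $B$ and $k$ is a $u\in\mathbb Z[\omega]$ with $u\in\sqrt2^{\,k}A$ and $u^\bullet\in(-\sqrt2)^kB$. ''Contains a circle of radius $r$'' means contains a closed disk of radius $r$. *)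

(* Defs.v *)
(* the plane R^2 = C is modelled as R * R (real, imaginary part). *)
From Stdlib Require Import Reals ZArith.
Open Scope R_scope.

Definition point := (R * R)%type.

Definition convex (A : point -> Prop) : Prop :=
  forall p q : point, A p -> A q -> forall t : R, 0 <= t <= 1 ->
    A ((1 - t) * fst p + t * fst q, (1 - t) * snd p + t * snd q).

Definition disk (c : point) (r : R) : point -> Prop :=
  fun p => (fst p - fst c) ^ 2 + (snd p - snd c) ^ 2 <= r ^ 2.

Definition contains_circle (A : point -> Prop) (r : R) : Prop :=
  exists c : point, forall p, disk c r p -> A p.

Definition scale_set (s : R) (A : point -> Prop) : point -> Prop :=
  fun p => exists a, A a /\ p = (s * fst a, s * snd a).

(* Elements of Z[omega], omega = e^{i pi/4}, given by coefficients
   (a0,a1,a2,a3) of a0 + a1 w + a2 w^2 + a3 w^3. *)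
Record Zomega := mkZomega { za0 : Z; za1 : Z; za2 : Z; za3 : Z }.

(* Complex value: w = (1+i)/sqrt2, w^2 = i, w^3 = (-1+i)/sqrt2. *)
Definition Zomega_val (u : Zomega) : point :=
  (IZR (za0 u) + (IZR (za1 u) - IZR (za3 u)) / sqrt 2,
   IZR (za2 u) + (IZR (za1 u) + IZR (za3 u)) / sqrt 2).

Definition Zomega_bullet (u : Zomega) : Zomega :=
  mkZomega (za0 u) (- za1 u)%Z (za2 u) (- za3 u)%Z.

Definition scaled_grid_solution (A B : point -> Prop) (k : nat) (u : Zomega) : Prop :=
  scale_set (sqrt 2 ^ k) A (Zomega_val u) /\
  scale_set ((- sqrt 2) ^ k) B (Zomega_val (Zomega_bullet u)).

(* Main.v *)
Require Import Defs.
From Stdlib Require Import Reals ZArith Lra Lia Psatz.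
Open Scope R_scope.

Lemma s2_sq : sqrt 2 * sqrt 2 = 2.
Proof. apply sqrt_sqrt; lra. Qed.

Lemma s2_bounds : 1.41 < sqrt 2 < 1.42.
Proof.
  pose proof s2_sq as H. pose proof (sqrt_lt_R0 2 ltac:(lra)) as H0.
  split; nra.
Qed.

Definition inbox x0 d y0 D (a b : Z) :=
  x0 <= IZR a + IZR b * sqrt 2 <= x0 + d /\ y0 <= IZR a - IZR b * sqrt 2 <= y0 + D.

Definition S2 x0 d y0 D := exists a1 b1 a2 b2,
  IZR a1 + IZR b1 * sqrt 2 <> IZR a2 + IZR b2 * sqrt 2 /\
  inbox x0 d y0 D a1 b1 /\ inbox x0 d y0 D a2 b2.

Lemma exists_mult p L : L >= 2 * sqrt 2 ->
  exists b : Z, p <= 2 * (IZR b * sqrt 2) <= p + L.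
Proof.
  intros HL. pose proof s2_bounds as Hs.
  set (q := p / (2 * sqrt 2)).
  destruct (archimed q) as [H1 H2].
  exists (up q).
  assert (Hp : p = 2 * sqrt 2 * q) by (unfold q; field; lra).
  split; nra.
Qed.

Lemma base2 x0 d y0 D : d >= 2 -> D >= 2 -> d + D >= 4 + 2 * sqrt 2 ->
  S2 x0 d y0 D.
Proof.
  intros Hd HD HdD.
  destruct (exists_mult (x0 - y0 - D + 2) (d + D - 4) ltac:(lra)) as [b Hb].
  set (t := IZR b * sqrt 2) in *.
  set (p := Rmax (x0 - t) (y0 + t)).
  destruct (archimed p) as [H1 H2].
  exists (up p), b, (up p + 1)%Z, b.
  unfold inbox. rewrite plus_IZR. fold t.
  assert (Hp1 : x0 - t <= p) by apply Rmax_l.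
  assert (Hp2 : y0 + t <= p) by apply Rmax_r.
  assert (Hp3 : p = x0 - t \/ p = y0 + t).
  { unfold p, Rmax; destruct (Rle_dec _ _); auto. }
  destruct Hp3 as [E|E]; repeat split; lra.
Qed.

Lemma base' x0 d y0 D : 2 <= d -> d <= 2 + 2 * sqrt 2 -> 0 < D ->
  d * D >= 6 + 4 * sqrt 2 -> S2 x0 d y0 D.
Proof.
  intros H1 H2 H3 H4. pose proof s2_bounds. pose proof s2_sq.
  apply base2.
  - lra.
  - assert (D * d <= D * (2 + 2 * sqrt 2)) by (apply Rmult_le_compat_l; lra).
    assert (D * (2 + 2 * sqrt 2) >= (1 + sqrt 2) * (2 + 2 * sqrt 2)) by nra.
    nra.
  - assert ((d + D) * (d + D) >= (4 + 2 * sqrt 2) * (4 + 2 * sqrt 2)).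
    { replace ((4 + 2 * sqrt 2) * (4 + 2 * sqrt 2)) with (16 + 16 * sqrt 2 + 4 * (sqrt 2 * sqrt 2)) by ring.
      rewrite s2_sq. pose proof (pow2_ge_0 (d - D)). nra. }
    nra.
Qed.

Lemma le_scale m l x X : 0 <= m -> m * l = 1 -> l * x <= X -> x <= m * X.
Proof.
  intros H0 H1 H2. replace x with (m * (l * x)) by (rewrite <- Rmult_assoc, H1; ring).
  apply Rmult_le_compat_l; auto.
Qed.

Lemma ge_scale m l x X : 0 <= m -> m * l = 1 -> X <= l * x -> m * X <= x.
Proof.
  intros H0 H1 H2. replace x with (m * (l * x)) by (rewrite <- Rmult_assoc, H1; ring).
  apply Rmult_le_compat_l; auto.
Qed.

Lemma ml1 : (sqrt 2 - 1) * (1 + sqrt 2) = 1.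
Proof. pose proof s2_sq. nra. Qed.
Lemma lm1 : (1 + sqrt 2) * (sqrt 2 - 1) = 1.
Proof. pose proof s2_sq. nra. Qed.

Lemma scale_up x0 d y0 D :
  S2 ((1 + sqrt 2) * x0) ((1 + sqrt 2) * d) (- ((sqrt 2 - 1) * (y0 + D))) ((sqrt 2 - 1) * D) ->
  S2 x0 d y0 D.
Proof.
  pose proof s2_bounds. pose proof s2_sq. pose proof ml1. pose proof lm1.
  assert (Hm : 0 <= sqrt 2 - 1) by lra. assert (Hl : 0 <= 1 + sqrt 2) by lra.
  assert (T : forall a b, IZR (2*b - a) + IZR (a - b) * sqrt 2 =
      (sqrt 2 - 1) * (IZR a + IZR b * sqrt 2)
    /\ IZR (2*b - a) - IZR (a - b) * sqrt 2 = - ((1 + sqrt 2) * (IZR a - IZR b * sqrt 2))).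
  { intros a b. rewrite !minus_IZR, mult_IZR. assert (E : sqrt 2 * sqrt 2 - 2 = 0) by lra.
    split; apply Rminus_diag_uniq;
    (transitivity (- IZR b * (sqrt 2 * sqrt 2 - 2)); [ring | rewrite E; ring]). }
  assert (B : forall a b, inbox ((1 + sqrt 2) * x0) ((1 + sqrt 2) * d)
      (- ((sqrt 2 - 1) * (y0 + D))) ((sqrt 2 - 1) * D) a b ->
      inbox x0 d y0 D (2*b - a) (a - b)).
  { intros a b [[X1 X2] [Y1 Y2]]. unfold inbox. destruct (T a b) as [E1 E2].
    rewrite E1, E2. repeat split.
    - apply (le_scale _ (1 + sqrt 2)); auto.
    - apply (ge_scale _ (1 + sqrt 2)); auto. lra.
    - assert ((1 + sqrt 2) * (IZR a - IZR b * sqrt 2) <= - y0).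
      { apply (ge_scale _ (sqrt 2 - 1)); auto. lra. } lra.
    - assert (- (y0 + D) <= (1 + sqrt 2) * (IZR a - IZR b * sqrt 2)).
      { apply (le_scale _ (sqrt 2 - 1)); auto. lra. } lra. }
  intros [a1 [b1 [a2 [b2 [N [I1 I2]]]]]].
  exists (2*b1 - a1)%Z, (a1 - b1)%Z, (2*b2 - a2)%Z, (a2 - b2)%Z.
  split; [|split; auto].
  destruct (T a1 b1) as [E1 _]; destruct (T a2 b2) as [E2 _]. rewrite E1, E2.
  intro C. apply N. apply (f_equal (Rmult (1 + sqrt 2))) in C.
  rewrite <- !Rmult_assoc, lm1, !Rmult_1_l in C. exact C.
Qed.

Lemma scale_down x0 d y0 D :
  S2 ((sqrt 2 - 1) * x0) ((sqrt 2 - 1) * d) (- ((1 + sqrt 2) * (y0 + D))) ((1 + sqrt 2) * D) ->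
  S2 x0 d y0 D.
Proof.
  pose proof s2_bounds. pose proof s2_sq. pose proof ml1. pose proof lm1.
  assert (Hm : 0 <= sqrt 2 - 1) by lra. assert (Hl : 0 <= 1 + sqrt 2) by lra.
  assert (T : forall a b, IZR (a + 2*b) + IZR (a + b) * sqrt 2 =
      (1 + sqrt 2) * (IZR a + IZR b * sqrt 2)
    /\ IZR (a + 2*b) - IZR (a + b) * sqrt 2 = - ((sqrt 2 - 1) * (IZR a - IZR b * sqrt 2))).
  { intros a b. rewrite !plus_IZR, mult_IZR. assert (E : sqrt 2 * sqrt 2 - 2 = 0) by lra.
    split; apply Rminus_diag_uniq;
    (transitivity (- IZR b * (sqrt 2 * sqrt 2 - 2)); [ring | rewrite E; ring]). }
  assert (B : forall a b, inbox ((sqrt 2 - 1) * x0) ((sqrt 2 - 1) * d)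
      (- ((1 + sqrt 2) * (y0 + D))) ((1 + sqrt 2) * D) a b ->
      inbox x0 d y0 D (a + 2*b) (a + b)).
  { intros a b [[X1 X2] [Y1 Y2]]. unfold inbox. destruct (T a b) as [E1 E2].
    rewrite E1, E2. repeat split.
    - apply (le_scale _ (sqrt 2 - 1)); auto.
    - apply (ge_scale _ (sqrt 2 - 1)); auto. lra.
    - assert ((sqrt 2 - 1) * (IZR a - IZR b * sqrt 2) <= - y0).
      { apply (ge_scale _ (1 + sqrt 2)); auto. lra. } lra.
    - assert (- (y0 + D) <= (sqrt 2 - 1) * (IZR a - IZR b * sqrt 2)).
      { apply (le_scale _ (1 + sqrt 2)); auto. lra. } lra. }
  intros [a1 [b1 [a2 [b2 [N [I1 I2]]]]]].
  exists (a1 + 2*b1)%Z, (a1 + b1)%Z, (a2 + 2*b2)%Z, (a2 + b2)%Z.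
  split; [|split; auto].
  destruct (T a1 b1) as [E1 _]; destruct (T a2 b2) as [E2 _]. rewrite E1, E2.
  intro C. apply N. apply (f_equal (Rmult (sqrt 2 - 1))) in C.
  rewrite <- !Rmult_assoc, ml1, !Rmult_1_l in C. exact C.
Qed.

Lemma small n : forall x0 d y0 D, 0 < d -> 0 < D -> d * D >= 6 + 4 * sqrt 2 ->
  2 <= (1 + sqrt 2) ^ n * d -> d <= 2 + 2 * sqrt 2 -> S2 x0 d y0 D.
Proof.
  pose proof s2_bounds. pose proof ml1.
  induction n; intros x0 d y0 D H1 H2 H3 H4 H5.
  - simpl in H4. apply base'; lra.
  - destruct (Rle_dec 2 d). { apply base'; lra. }
    apply scale_up. apply IHn.
    + nra.
    + nra.
    + replace ((1 + sqrt 2) * d * ((sqrt 2 - 1) * D)) with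
        (((sqrt 2 - 1) * (1 + sqrt 2)) * (d * D)) by ring. rewrite ml1. lra.
    + simpl in H4. lra.
    + nra.
Qed.

Lemma large n : forall x0 d y0 D, 0 < d -> 0 < D -> d * D >= 6 + 4 * sqrt 2 ->
  d <= 2 * (1 + sqrt 2) ^ (S n) -> 2 <= d -> S2 x0 d y0 D.
Proof.
  pose proof s2_bounds. pose proof lm1.
  induction n; intros x0 d y0 D H1 H2 H3 H4 H5.
  - simpl in H4. apply base'; lra.
  - destruct (Rle_dec d (2 + 2 * sqrt 2)). { apply base'; lra. }
    apply scale_down. apply IHn.
    + nra.
    + nra.
    + replace ((sqrt 2 - 1) * d * ((1 + sqrt 2) * D)) with
        (((1 + sqrt 2) * (sqrt 2 - 1)) * (d * D)) by ring. rewrite lm1. lra.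
    + assert (E : 2 * (1 + sqrt 2) ^ S (S n) = (1 + sqrt 2) * (2 * (1 + sqrt 2) ^ S n))
        by (simpl; ring).
      rewrite E in H4.
      replace (2 * (1 + sqrt 2) ^ S n) with ((sqrt 2 - 1) * ((1 + sqrt 2) * (2 * (1 + sqrt 2) ^ S n)))
        by (rewrite <- Rmult_assoc, ml1; ring).
      apply Rmult_le_compat_l; lra.
    + nra.
Qed.

Lemma lam_pow n : INR n + 1 <= (1 + sqrt 2) ^ n.
Proof.
  pose proof s2_bounds. induction n.
  - simpl; lra.
  - rewrite S_INR. simpl. pose proof (pos_INR n). nra.
Qed.

Lemma grid1 x0 d y0 D : 0 < d -> 0 < D -> d * D >= 6 + 4 * sqrt 2 -> S2 x0 d y0 D.
Proof.
  intros H1 H2 H3. pose proof s2_bounds.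
  destruct (Rle_dec 2 d).
  - destruct (archimed d) as [A1 _].
    assert (Hz : (0 <= up d)%Z) by (apply le_IZR; lra).
    apply (large (Z.to_nat (up d))); auto.
    pose proof (lam_pow (S (Z.to_nat (up d)))). rewrite S_INR, INR_IZR_INZ, Z2Nat.id in H0 by auto.
    lra.
  - destruct (archimed (2 / d)) as [A1 _].
    assert (Hz : (0 <= up (2/d))%Z).
    { apply le_IZR. assert (0 < 2 / d) by (apply Rdiv_lt_0_compat; lra). lra. }
    apply (small (Z.to_nat (up (2/d)))); auto; [|lra].
    pose proof (lam_pow (Z.to_nat (up (2/d)))). rewrite INR_IZR_INZ, Z2Nat.id in H0 by auto.
    assert (2 <= (2 / d) * d) by (right; field; lra).
    assert (2 / d <= (1 + sqrt 2) ^ Z.to_nat (up (2 / d))) by lra.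
    nra.
Qed.

Lemma val_eq a m c n :
  Zomega_val (mkZomega a (m + n) c (n - m)) = (IZR a + IZR m * sqrt 2, IZR c + IZR n * sqrt 2) /\
  Zomega_val (Zomega_bullet (mkZomega a (m + n) c (n - m))) = (IZR a - IZR m * sqrt 2, IZR c - IZR n * sqrt 2).
Proof.
  pose proof s2_bounds. pose proof s2_sq.
  assert (K : forall x, 2 * x / sqrt 2 = x * sqrt 2).
  { intros x. rewrite <- H0 at 1. field. lra. }
  unfold Zomega_val, Zomega_bullet; simpl.
  rewrite !opp_IZR, !plus_IZR, !minus_IZR.
  split; f_equal.
  - replace (IZR m + IZR n - (IZR n - IZR m)) with (2 * IZR m) by ring. rewrite K; ring.
  - replace (IZR m + IZR n + (IZR n - IZR m)) with (2 * IZR n) by ring. rewrite K; ring.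
  - replace (- (IZR m + IZR n) - - (IZR n - IZR m)) with (2 * - IZR m) by ring. rewrite K; ring.
  - replace (- (IZR m + IZR n) + - (IZR n - IZR m)) with (2 * - IZR n) by ring. rewrite K; ring.
Qed.

Lemma disk_scale (A : point -> Prop) s c r X Y : s <> 0 -> (forall p, disk c r p -> A p) ->
  (X - s * fst c) ^ 2 + (Y - s * snd c) ^ 2 <= (s * r) ^ 2 -> scale_set s A (X, Y).
Proof.
  intros Hs HA H. exists (X / s, Y / s). split.
  - apply HA. unfold disk; cbn [fst snd].
    assert (P : 0 < s * s) by (apply Rsqr_pos_lt; auto).
    replace ((X / s - fst c) ^ 2 + (Y / s - snd c) ^ 2) with
      (((X - s * fst c) ^ 2 + (Y - s * snd c) ^ 2) / (s * s)) by (field; auto).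
    replace (r ^ 2) with ((s * r) ^ 2 / (s * s)) by (field; auto).
    unfold Rdiv. apply Rmult_le_compat_r; auto. left; apply Rinv_0_lt_compat; auto.
  - simpl. f_equal; field; auto.
Qed.

Lemma box_disk X Y C1 C2 h rho : C1 - h <= X <= C1 - h + 2 * h -> C2 - h <= Y <= C2 - h + 2 * h ->
  2 * h ^ 2 = rho ^ 2 -> (X - C1) ^ 2 + (Y - C2) ^ 2 <= rho ^ 2.
Proof. intros. rewrite <- H1. nra. Qed.

Theorem lemma5p57 (A B : point -> Prop) (k : nat) (r R0 : R) :
  convex A -> convex B ->
  0 <= r -> 0 <= R0 ->
  contains_circle A r -> contains_circle B R0 ->
  r * R0 >= / (2 ^ k) * (1 + sqrt 2) ^ 2 ->
  exists u1 u2 : Zomega,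
    Zomega_val u1 <> Zomega_val u2 /\
    scaled_grid_solution A B k u1 /\ scaled_grid_solution A B k u2.
Proof.
  intros _ _ Hr HR [c1 HA] [c2 HB] Hprod.
  pose proof s2_bounds as Hs. pose proof s2_sq as Hsq.
  set (s1 := sqrt 2 ^ k). set (s2 := (- sqrt 2) ^ k).
  assert (Hs1 : 0 < s1) by (apply pow_lt; lra).
  assert (Hs2 : s2 <> 0) by (apply pow_nonzero; lra).
  assert (E1 : s1 ^ 2 = 2 ^ k).
  { unfold s1. rewrite <- pow_mult, Nat.mul_comm, pow_mult. f_equal. simpl. lra. }
  assert (E2 : s2 ^ 2 = 2 ^ k).
  { unfold s2. rewrite <- pow_mult, Nat.mul_comm, pow_mult. f_equal. simpl. lra. }
  assert (P2 : 0 < 2 ^ k) by (apply pow_lt; lra).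
  assert (Hp : r * R0 * 2 ^ k >= 3 + 2 * sqrt 2).
  { replace (3 + 2 * sqrt 2) with ((1 + sqrt 2) ^ 2) by (simpl; nra).
    replace ((1 + sqrt 2) ^ 2) with (/ 2 ^ k * (1 + sqrt 2) ^ 2 * 2 ^ k) by (field; lra).
    apply Rle_ge, Rmult_le_compat_r; lra. }
  assert (Hrp : 0 < r) by (destruct Hr as [|<-]; [auto| nra]).
  assert (HRp : 0 < R0) by (destruct HR as [|<-]; [auto| nra]).
  set (h1 := s1 * r / sqrt 2). set (h2 := s1 * R0 / sqrt 2).
  assert (Hh1 : 0 < h1) by (unfold h1; apply Rdiv_lt_0_compat; nra).
  assert (Hh2 : 0 < h2) by (unfold h2; apply Rdiv_lt_0_compat; nra).
  assert (Hd : 2 * h1 * (2 * h2) >= 6 + 4 * sqrt 2).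
  { assert (EE : 2 * h1 * (2 * h2) = 4 * (r * R0 * s1 ^ 2) / (sqrt 2 * sqrt 2)) by (unfold h1, h2; field; lra).
    rewrite EE, Hsq, E1. lra. }
  assert (Q1 : 2 * h1 ^ 2 = (s1 * r) ^ 2).
  { unfold h1. replace (2 * (s1 * r / sqrt 2) ^ 2) with (2 * (s1 * r) ^ 2 / (sqrt 2 * sqrt 2)) by (field; lra). rewrite Hsq. field. }
  assert (Q2 : 2 * h2 ^ 2 = (s2 * R0) ^ 2).
  { rewrite Rpow_mult_distr, E2, <- E1, <- Rpow_mult_distr. unfold h2. replace (2 * (s1 * R0 / sqrt 2) ^ 2) with (2 * (s1 * R0) ^ 2 / (sqrt 2 * sqrt 2)) by (field; lra). rewrite Hsq. field. }
  destruct (grid1 (s1 * fst c1 - h1) (2 * h1) (s2 * fst c2 - h2) (2 * h2)) as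
    [a1 [b1 [a2 [b2 [N [[X1 Y1] [X2 Y2]]]]]]]; try lra.
  destruct (grid1 (s1 * snd c1 - h1) (2 * h1) (s2 * snd c2 - h2) (2 * h2)) as
    [c [n [_ [_ [_ [[Z1 W1] _]]]]]]; try lra.
  exists (mkZomega a1 (b1 + n) c (n - b1)), (mkZomega a2 (b2 + n) c (n - b2)).
  destruct (val_eq a1 b1 c n) as [V1 V1'].
  destruct (val_eq a2 b2 c n) as [V2 V2'].
  unfold scaled_grid_solution. rewrite V1, V1', V2, V2'.
  split; [intro C; injection C; intros; apply N; auto|].
  assert (S1 : s1 <> 0) by lra.
  split; split.
  - apply (disk_scale A s1 c1 r); auto. apply (box_disk _ _ _ _ h1); auto.
  - apply (disk_scale B s2 c2 R0); auto. apply (box_disk _ _ _ _ h2); auto.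
  - apply (disk_scale A s1 c1 r); auto. apply (box_disk _ _ _ _ h1); auto.
  - apply (disk_scale B s2 c2 R0); auto. apply (box_disk _ _ _ _ h2); auto.
Qed.
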